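(* Let $X$ be a smooth Minkowski plane and $A\subset X$ finite with $|A|$ even. If $\mathrm{FT}(A)$ intersects the boundary of $\operatorname{conv}A$, then $A$ is a double cluster or a pseudo double cluster.
   Context: A Minkowski plane is a two-dimensional real normed space $(X,\|\cdot\|)$ with unit ball $B$; it is smooth if every boundary point of $B$ has a unique supporting line. A proper exposed face of $B$ is the intersection of $B$ with a supporting line. For finite $A$, $\mathrm{FT}(A)$ is the set of minimizers of $\mathbf{x}\mapsto\sum_{\mathbf{a}\in A}\|\mathbf{x}-\mathbf{a}\|$ (Fermat-Torricelli points). A set $C=\{\mathbf{x}_1,\dots,\mathbf{x}_m,\mathbf{y}_1,\dots,\mathbf{y}_m\}$ is a double cluster with pairs $\mathbf{x}_i,\mathbf{y}_i$ if all $\frac{\mathbf{x}_i-\mathbf{y}_i}{\|\mathbf{x}_i-\mathbf{y}_i\|}$ lie in the same proper exposed face of $B$. A pseudo double cluster is the union of a double cluster $C$, a Fermat-Torricelli point of $C$ (its centre), and one further arbitrary point. *)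

(* Defs.v *)
(* the Minkowski plane is R^2 = 'rV[R]_2 over R : realType,
   equipped with an arbitrary norm N. *)
From HB Require Import structures.
From mathcomp Require Import all_boot all_order all_algebra.
From mathcomp Require Import reals.
Set Implicit Arguments. Unset Strict Implicit. Unset Printing Implicit Defensive.
Import Order.TTheory GRing.Theory Num.Theory.
Local Open Scope ring_scope.

Section Minkowski.
Variable R : realType.
Notation pt := ('rV[R]_2).

Definition is_norm (N : pt -> R) : Prop :=
  [/\ forall x, N x = 0 -> x = 0,
      forall (a : R) x, N (a *: x) = `|a| * N x &
      forall x y, N (x + y) <= N x + N y].

(* the linear functional x |-> <x, w> (every linear functional on R^2 has this form) *)
Definition dotp (x w : pt) : R := \sum_(i < 2) x 0 i * w 0 i.

Definition unit_ball (N : pt -> R) (b : pt) : Prop := N b <= 1.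

Definition supporting_line (N : pt -> R) (w : pt) (al : R) : Prop :=
  [/\ w != 0,
      forall b, unit_ball N b -> dotp b w <= al &
      exists b, unit_ball N b /\ dotp b w = al].

Definition smooth (N : pt -> R) : Prop :=
  forall u, N u = 1 ->
  forall w1 al1 w2 al2,
    supporting_line N w1 al1 -> dotp u w1 = al1 ->
    supporting_line N w2 al2 -> dotp u w2 = al2 ->
    (forall x, dotp x w1 = al1 <-> dotp x w2 = al2).

Definition proper_exposed_face (N : pt -> R) (F : pt -> Prop) : Prop :=
  exists w al, supporting_line N w al /\
    (forall b, F b <-> (unit_ball N b /\ dotp b w = al)).

(* Fermat-Torricelli points of the finite set A (given as a duplicate-free seq) *)
Definition is_FT (N : pt -> R) (A : seq pt) (x : pt) : Prop :=
  forall y, \sum_(a <- A) N (x - a) <= \sum_(a <- A) N (y - a).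

Definition conv (A : seq pt) (x : pt) : Prop :=
  exists l : 'I_(size A) -> R,
    [/\ forall i, 0 <= l i, \sum_i l i = 1 &
        x = \sum_i l i *: (nth 0 A i)].

Definition in_boundary (N : pt -> R) (S : pt -> Prop) (x : pt) : Prop :=
  forall e : R, 0 < e ->
    (exists y, S y /\ N (y - x) < e) /\ (exists z, ~ S z /\ N (z - x) < e).

(* C = {x_1,..,x_m,y_1,..,y_m} (2m distinct points, i.e. C is the disjoint union
   of the pairs) and all (x_i - y_i)/||x_i - y_i|| lie in one proper exposed face *)
Definition double_cluster (N : pt -> R) (C : seq pt) : Prop :=
  exists (m : nat) (x y : 'I_m -> pt),
    perm_eq C ([seq x i | i <- enum 'I_m] ++ [seq y i | i <- enum 'I_m]) /\
    exists F, proper_exposed_face N F /\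
      forall i, F ((N (x i - y i))^-1 *: (x i - y i)).

Definition pseudo_double_cluster (N : pt -> R) (A : seq pt) : Prop :=
  exists (C : seq pt) (c p : pt),
    [/\ uniq C, double_cluster N C, is_FT N C c &
        forall z, z \in A <-> (z \in C \/ z = c \/ z = p)].

End Minkowski.

(* Main.v *)
Require Import Defs.
From HB Require Import structures.
From mathcomp Require Import all_boot all_order all_algebra.
From mathcomp Require Import reals.
From mathcomp Require Import boolp classical_sets.
From mathcomp Require Import ring lra zify.
Set Implicit Arguments. Unset Strict Implicit. Unset Printing Implicit Defensive.
Import Order.TTheory GRing.Theory Num.Theory.
Local Open Scope ring_scope.


Section Basics.
Variable R : realType.
Notation pt := ('rV[R]_2).

Definition c0 (v : pt) : R := v 0 0.
Definition c1 (v : pt) : R := v 0 1.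

Lemma dotpE (x w : pt) : dotp x w = c0 x * c0 w + c1 x * c1 w.
Proof.
rewrite /dotp big_ord_recr big_ord1 /c0 /c1 /=.
have -> : widen_ord (leqnSn 1) ord0 = 0 :> 'I_2 by apply/val_inj.
have -> : ord_max = 1 :> 'I_2 by apply/val_inj.
by [].
Qed.

Lemma vec_eq (x y : pt) : c0 x = c0 y -> c1 x = c1 y -> x = y.
Proof.
move=> h0 h1; apply/rowP => j.
case: j => [[|[|k]]] hk.
- by have -> : Ordinal hk = 0 by apply/val_inj.
- by have -> : Ordinal hk = 1 by apply/val_inj.
- by [].
Qed.

Lemma c0D (x y : pt) : c0 (x + y) = c0 x + c0 y. Proof. by rewrite /c0 mxE. Qed.
Lemma c1D (x y : pt) : c1 (x + y) = c1 x + c1 y. Proof. by rewrite /c1 mxE. Qed.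
Lemma c0Z (a : R) (x : pt) : c0 (a *: x) = a * c0 x. Proof. by rewrite /c0 mxE. Qed.
Lemma c1Z (a : R) (x : pt) : c1 (a *: x) = a * c1 x. Proof. by rewrite /c1 mxE. Qed.
Lemma c0N (x : pt) : c0 (- x) = - c0 x. Proof. by rewrite /c0 mxE. Qed.
Lemma c1N (x : pt) : c1 (- x) = - c1 x. Proof. by rewrite /c1 mxE. Qed.
Lemma c0B (x y : pt) : c0 (x - y) = c0 x - c0 y. Proof. by rewrite c0D c0N. Qed.
Lemma c1B (x y : pt) : c1 (x - y) = c1 x - c1 y. Proof. by rewrite c1D c1N. Qed.
Lemma c00 : c0 (0 : pt) = 0. Proof. by rewrite /c0 mxE. Qed.
Lemma c10 : c1 (0 : pt) = 0. Proof. by rewrite /c1 mxE. Qed.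

Definition mkv (a b : R) : pt := \row_(j < 2) (if j == 0 then a else b).
Lemma c0mk a b : c0 (mkv a b) = a. Proof. by rewrite /c0 mxE. Qed.
Lemma c1mk a b : c1 (mkv a b) = b. Proof. by rewrite /c1 mxE. Qed.

Definition cE := (c0D, c1D, c0Z, c1Z, c0N, c1N, c00, c10, c0mk, c1mk).

Lemma dotpDl (x y w : pt) : dotp (x + y) w = dotp x w + dotp y w.
Proof. rewrite !dotpE !cE; ring. Qed.
Lemma dotpZl (a : R) (x w : pt) : dotp (a *: x) w = a * dotp x w.
Proof. rewrite !dotpE !cE; ring. Qed.
Lemma dotpNl (x w : pt) : dotp (- x) w = - dotp x w.
Proof. rewrite !dotpE !cE; ring. Qed.
Lemma dotpBl (x y w : pt) : dotp (x - y) w = dotp x w - dotp y w.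
Proof. by rewrite dotpDl dotpNl. Qed.
Lemma dotp0l (w : pt) : dotp 0 w = 0.
Proof. rewrite !dotpE !cE; ring. Qed.
Lemma dotpNr (x w : pt) : dotp x (- w) = - dotp x w.
Proof. rewrite !dotpE !cE; ring. Qed.
Lemma dotp0r (x : pt) : dotp x 0 = 0.
Proof. rewrite !dotpE !cE; ring. Qed.

End Basics.


Section Norm.
Variable R : realType.
Notation pt := ('rV[R]_2).
Variable N : pt -> R.
Hypothesis hN : is_norm N.

Lemma NZ (a : R) (x : pt) : N (a *: x) = `|a| * N x.
Proof. by case: hN. Qed.
Lemma Ntri (x y : pt) : N (x + y) <= N x + N y.
Proof. by case: hN. Qed.
Lemma N0 : N 0 = 0.
Proof. by rewrite -(scale0r (0 : pt)) NZ normr0 mul0r. Qed.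
Lemma NN (x : pt) : N (- x) = N x.
Proof. by rewrite -scaleN1r NZ normrN normr1 mul1r. Qed.
Lemma Nge0 (x : pt) : 0 <= N x.
Proof.
have := Ntri x (- x); rewrite subrr N0 NN => h.
have : 0 <= N x + N x by [].
lra.
Qed.
Lemma Nsym (x y : pt) : N (x - y) = N (y - x).
Proof. by rewrite -NN opprB. Qed.
Lemma Neq0 (x : pt) : N x = 0 -> x = 0.
Proof. by case: hN => h _ _; apply: h. Qed.
Lemma Ngt0 (x : pt) : x != 0 -> 0 < N x.
Proof.
move=> hx; rewrite lt_def Nge0 andbT; apply/eqP => h; move/eqP: hx; apply.
exact: Neq0.
Qed.
Lemma NZp (a : R) (x : pt) : 0 <= a -> N (a *: x) = a * N x.
Proof. by move=> ha; rewrite NZ ger0_norm. Qed.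

Definition bounded (w : pt) := forall y, dotp y w <= N y.
Definition norming (z w : pt) := bounded w /\ dotp z w = N z.

Definition cross (z v : pt) : R := c0 z * c1 v - c1 z * c0 v.

Lemma nz_coord (z : pt) : z != 0 -> 0 < c0 z ^+ 2 + c1 z ^+ 2.
Proof.
move=> hz.
have : c0 z != 0 \/ c1 z != 0.
  case: (eqVneq (c0 z) 0) => h0; last by left.
  case: (eqVneq (c1 z) 0) => h1; last by right.
  by move/eqP: hz; case; apply: vec_eq; rewrite ?h0 ?h1 cE.
case=> h.
- have : 0 < c0 z ^+ 2 by rewrite lt_def sqr_ge0 andbT sqrf_eq0.
  have := sqr_ge0 (c1 z). lra.
- have : 0 < c1 z ^+ 2 by rewrite lt_def sqr_ge0 andbT sqrf_eq0.
  have := sqr_ge0 (c0 z). lra.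
Qed.


Lemma bounded_N (w : pt) : bounded w -> bounded (- w).
Proof. by move=> hw y; rewrite dotpNr -dotpNl -(NN (y)) hw. Qed.

Definition hbw (z v : pt) (c : R) : pt :=
  mkv ((c1 v * N z - c1 z * c) / cross z v) ((c0 z * c - c0 v * N z) / cross z v).

Lemma hbw_z (z v : pt) c : cross z v != 0 -> dotp z (hbw z v c) = N z.
Proof. move=> hd; rewrite dotpE /hbw !cE; move: hd; rewrite /cross => hd; by field. Qed.

Lemma hbw_v (z v : pt) c : cross z v != 0 -> dotp v (hbw z v c) = c.
Proof. move=> hd; rewrite dotpE /hbw !cE; move: hd; rewrite /cross => hd; by field. Qed.

Lemma hbw_bounded (z v : pt) c : cross z v != 0 ->
  (forall l, c <= N (l *: z + v) - l * N z) ->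
  (forall l, l * N z - N (l *: z - v) <= c) -> bounded (hbw z v c).
Proof.
move=> hd hup hlo y.
set d := cross z v.
set a := cross y v / d; set b := cross z y / d.
have ey : y = a *: z + b *: v.
  by apply: vec_eq; rewrite !cE /a /b /d; move: hd; rewrite /d /cross => hd; field.
have dy : dotp y (hbw z v c) = a * N z + b * c.
  by rewrite {1}ey dotpDl !dotpZl hbw_z // hbw_v.
rewrite dy ey.
have hNz := Nge0 z.
have [hb|hb|hb] := ltgtP b 0.
- have hb' : -b != 0 by rewrite oppr_eq0 lt_eqF.
  set a' := a / (-b).
  have ha : a = (-b) * a' by rewrite /a' mulrC divfK.
  have e : a *: z + b *: v = (-b) *: (a' *: z - v).
    by apply: vec_eq; rewrite !cE ha; ring.
  rewrite e NZp; last by rewrite oppr_ge0 ltW.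
  rewrite ha.
  have := hlo a'; set K := N (a' *: z - v) => h.
  have h2 : 0 <= (-b) * (c - (a' * N z - K)) by apply: mulr_ge0; lra.
  nra.
- set a' := a / b.
  have hb' : b != 0 by rewrite gt_eqF.
  have ha : a = b * a' by rewrite /a' mulrC divfK.
  have e : a *: z + b *: v = b *: (a' *: z + v).
    by apply: vec_eq; rewrite !cE ha; ring.
  rewrite e NZp; last by rewrite ltW.
  rewrite ha.
  have := hup a'; set K := N (a' *: z + v) => h.
  have h2 : 0 <= b * (K - a' * N z - c) by apply: mulr_ge0; lra.
  nra.
- rewrite hb scale0r addr0 mul0r addr0 NZ.
  by rewrite ler_wpM2r // ler_norm.
Qed.

Definition rot2 (z : pt) : pt := mkv (- c1 z) (c0 z).

Lemma cross_rot (z : pt) : cross z (rot2 z) = c0 z ^+ 2 + c1 z ^+ 2.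
Proof. rewrite /cross /rot2 !cE; ring. Qed.

Definition hbS (z : pt) : set R := fun r => exists l, r = l * N z - N (l *: z - rot2 z).

Definition nf (z : pt) : pt := hbw z (rot2 z) (sup (hbS z)).

Lemma hb_sep (z v : pt) l m : l * N z - N (l *: z - v) <= N (m *: z + v) - m * N z.
Proof.
have e : (l + m) *: z = (l *: z - v) + (m *: z + v).
  by apply: vec_eq; rewrite !cE; ring.
have := Ntri (l *: z - v) (m *: z + v); rewrite -e NZ => h.
have : (l + m) * N z <= `|l + m| * N z by rewrite ler_wpM2r ?Nge0 ?ler_norm.
lra.
Qed.

Lemma nf_norming (z : pt) : z != 0 -> norming z (nf z).
Proof.
move=> hz.
have hd : cross z (rot2 z) != 0 by rewrite cross_rot gt_eqF // nz_coord.
have hub : forall m, ubound (hbS z) (N (m *: z + rot2 z) - m * N z).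
  by move=> m r [l ->]; apply: hb_sep.
have hne : nonempty (hbS z) by exists (0 * N z - N (0 *: z - rot2 z)); exists 0.
split; last exact: hbw_z.
apply: hbw_bounded => // l.
- by apply: ge_sup => //; apply: hub.
- apply: (ub_le_sup); last by exists l.
  by exists (N (0 *: z + rot2 z) - 0 * N z); apply: hub.
Qed.

Section Smooth.
Hypothesis hsm : smooth N.

Lemma uniq_norming (z w1 w2 : pt) : z != 0 -> norming z w1 -> norming z w2 ->
  forall y, dotp y w1 = dotp y w2.
Proof.
move=> hz [b1 e1] [b2 e2] y.
have hNz := Ngt0 hz.
set u := (N z)^-1 *: z.
have hu : N u = 1 by rewrite NZp ?invr_ge0 ?ltW // mulVf // gt_eqF.
have du1 : dotp u w1 = 1 by rewrite /u dotpZl e1 mulVf // gt_eqF.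
have du2 : dotp u w2 = 1 by rewrite /u dotpZl e2 mulVf // gt_eqF.
have sl : forall w, bounded w -> dotp u w = 1 -> supporting_line N w 1.
  move=> w bw duw; split.
  - by apply/eqP => w0; move: duw; rewrite w0 dotp0r => /eqP; rewrite eq_sym oner_eq0.
  - by move=> b; rewrite /unit_ball => hb; apply: le_trans (bw b) hb.
  - by exists u; split; rewrite /unit_ball ?hu.
have H := hsm hu (sl _ b1 du1) du1 (sl _ b2 du2) du2.
set r := y - (dotp y w1) *: u.
have : dotp (u + r) w1 = 1 by rewrite /r !dotpDl dotpNl (dotpZl (dotp y w1)) du1; ring.
move/H; rewrite /r !dotpDl dotpNl (dotpZl (dotp y w1)) du2 => h.
lra.
Qed.

End Smooth.
End Norm.


Section Deriv.
Variable R : realType.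
Notation pt := ('rV[R]_2).
Variable N : pt -> R.
Hypothesis hN : is_norm N.
Hypothesis hsm : smooth N.

Lemma deriv_bound (z y w : pt) (eps : R) : z != 0 -> norming N z w -> 0 < eps ->
  exists del, 0 < del /\ forall h, 0 < h -> h <= del ->
    N (z + h *: y) <= N z + h * (dotp y w + eps).
Proof.
move=> hz [bw ew] he.
set c' := dotp y w + eps.
have [[l hl]|hno] := pselect (exists l, N (l *: z + y) - l * N z <= c'); last first.
  exfalso.
  have hlt : forall l, c' < N (l *: z + y) - l * N z.
    move=> l; rewrite ltNge; apply/negP => h; apply: hno; by exists l.
  have [hd|hd] := eqVneq (cross z y) 0.
    have hS := nz_coord hz.
    set k := (c0 y * c0 z + c1 y * c1 z) / (c0 z ^+ 2 + c1 z ^+ 2).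
    have ey : y = k *: z.
      move: hd; rewrite /cross => /eqP; rewrite subr_eq0 => /eqP hd.
      apply: vec_eq; rewrite !cE /k.
      + apply: (@mulIf _ (c0 z ^+ 2 + c1 z ^+ 2)); first by rewrite gt_eqF.
        rewrite mulrAC divfK ?gt_eqF //.
        apply/eqP; rewrite -subr_eq0; apply/eqP.
        transitivity (c1 z * (c1 z * c0 y - c0 z * c1 y)); first ring.
        by rewrite hd subrr mulr0.
      + apply: (@mulIf _ (c0 z ^+ 2 + c1 z ^+ 2)); first by rewrite gt_eqF.
        rewrite mulrAC divfK ?gt_eqF //.
        apply/eqP; rewrite -subr_eq0; apply/eqP.
        transitivity (c0 z * (c0 z * c1 y - c1 z * c0 y)); first ring.
        by rewrite hd subrr mulr0.
    have := hlt (- k); rewrite ey scaleNr addNr (N0 hN) /c' ey dotpZl ew.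
    lra.
  have hw' : norming N z (hbw N z y c').
    split; last exact: hbw_z.
    apply: hbw_bounded => // l; first by apply: ltW.
    have := bw (l *: z - y); rewrite dotpBl dotpZl ew => h.
    have := ltW he. rewrite /c'. lra.
  have := uniq_norming hN hsm hz (conj bw ew) hw' y.
  rewrite hbw_v // /c' => h. lra.
set lam := Num.max l 1.
have hlam1 : 1 <= lam by rewrite le_max lexx orbT.
have hlaml : l <= lam by rewrite le_max lexx.
have hlam0 : 0 < lam by lra.
have hG : N (lam *: z + y) - lam * N z <= c'.
  have e : lam *: z + y = (l *: z + y) + (lam - l) *: z.
    by apply: vec_eq; rewrite !cE; ring.
  have := Ntri hN (l *: z + y) ((lam - l) *: z).
  rewrite -e (NZp hN); last by lra.
  move=> h; lra.
exists lam^-1; split; first by rewrite invr_gt0.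
move=> h hh hhd.
have hhl : h * lam <= 1.
  have hl0 : lam != 0 by rewrite gt_eqF.
  by rewrite -(mulVf hl0) ler_wpM2r // ltW.
have e : z + h *: y = (1 - h * lam) *: z + h *: (lam *: z + y).
  by apply: vec_eq; rewrite !cE; ring.
rewrite e.
have := Ntri hN ((1 - h * lam) *: z) (h *: (lam *: z + y)).
rewrite (NZp hN); last by lra.
rewrite (NZp hN); last by lra.
move=> h1.
have h2 : h * (N (lam *: z + y) - lam * N z) <= h * c' by rewrite ler_wpM2l // ltW.
nra.
Qed.


Lemma sum_split_x (F : pt -> R) (s : seq pt) (x : pt) : uniq s ->
  \sum_(a <- s) F a = \sum_(a <- [seq a <- s | a != x]) F a + (if x \in s then F x else 0).
Proof.
elim: s => [|b s IH] /=; first by rewrite !big_nil addr0.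
case/andP => hb hu.
rewrite big_cons IH // in_cons.
have [<-|hbx] := eqVneq b x.
  by rewrite /= ?eqxx /= (negbTE hb) addr0 addrC.
by rewrite /= big_cons addrA.
Qed.

Lemma sum_deriv (x : pt) (s : seq pt) (y : pt) (eps : R) :
  (forall a, a \in s -> a != x) -> 0 < eps ->
  exists del, 0 < del /\ forall h, 0 < h -> h <= del ->
    \sum_(a <- s) N (x + h *: y - a) <=
    \sum_(a <- s) N (x - a) + h * (\sum_(a <- s) dotp y (nf N (x - a)) + (size s)%:R * eps).
Proof.
move=> hs he; elim: s hs => [|b s IH] hs.
  exists 1; split => // h hh _; rewrite !big_nil /= mul0r addr0 mulr0 addr0; exact: lexx.
have hb : x - b != 0 by rewrite subr_eq0 eq_sym hs // mem_head.
have [d1 [hd1 H1]] := deriv_bound y hb (nf_norming hN hb) he.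
have [d2 [hd2 H2]] : exists del, 0 < del /\ forall h, 0 < h -> h <= del ->
    \sum_(a <- s) N (x + h *: y - a) <=
    \sum_(a <- s) N (x - a) + h * (\sum_(a <- s) dotp y (nf N (x - a)) + (size s)%:R * eps).
  by apply: IH => a ha; apply: hs; rewrite in_cons ha orbT.
exists (Num.min d1 d2); split; first by rewrite lt_min hd1 hd2.
move=> h hh; rewrite le_min => /andP [h1 h2].
rewrite !big_cons.
have e : x + h *: y - b = (x - b) + h *: y by rewrite addrAC.
rewrite e.
have := H1 h hh h1; have := H2 h hh h2.
have -> : (size (b :: s))%:R = (size s)%:R + 1 :> R by rewrite /= mulrSr.
move=> i1 i2; nra.
Qed.

Lemma eps_ge0 (a n : R) : 0 <= n -> (forall eps, 0 < eps -> 0 <= a + n * eps) -> 0 <= a.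
Proof.
move=> hn H; rewrite leNgt; apply/negP => ha.
have hn1 : 0 < n + 1 by lra.
have := H (- a / (n + 1)); rewrite divr_gt0 ?oppr_gt0 // => /(_ isT).
have -> : a + n * (- a / (n + 1)) = a / (n + 1) by field; rewrite gt_eqF.
by rewrite pmulr_lge0 ?invr_gt0 // leNgt ha.
Qed.

Lemma ft_opt (A : seq pt) (x : pt) : uniq A -> is_FT N A x -> forall y,
  0 <= \sum_(a <- [seq a <- A | a != x]) dotp y (nf N (x - a)) + (if x \in A then N y else 0).
Proof.
move=> hu hft y.
set A' := [seq a <- A | a != x].
have hA' : forall a, a \in A' -> a != x by move=> a; rewrite mem_filter => /andP [].
apply: (@eps_ge0 _ (size A')%:R) => // eps he.
have [d [hd H]] := sum_deriv y hA' he.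
have := H d hd (lexx d).
have := hft (x + d *: y).
rewrite (sum_split_x _ x hu) (sum_split_x (fun a => N (x + d *: y - a)) x hu) -/A'.
rewrite subrr (N0 hN) addrAC subrr add0r (@NZp _ _ hN d y (ltW hd)).
case: (x \in A) => h1 h2.
- have : 0 <= d * (\sum_(a <- A') dotp y (nf N (x - a)) + N y + (size A')%:R * eps) by nra.
  by rewrite (pmulr_rge0 _ hd).
- have : 0 <= d * (\sum_(a <- A') dotp y (nf N (x - a)) + 0 + (size A')%:R * eps) by nra.
  by rewrite (pmulr_rge0 _ hd).
Qed.

End Deriv.


Section Cone.
Variable R : realType.
Notation pt := ('rV[R]_2).

Definition cone (A : seq pt) (x v : pt) := exists mu : pt -> R,
  (forall a, 0 <= mu a) /\ v = \sum_(a <- A) mu a *: (a - x).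

Lemma cone_add A x v1 v2 : cone A x v1 -> cone A x v2 -> cone A x (v1 + v2).
Proof.
move=> [m1 [h1 ->]] [m2 [h2 ->]]; exists (fun a => m1 a + m2 a); split.
  by move=> a; apply: addr_ge0.
by rewrite -big_split /=; apply: eq_bigr => a _; rewrite scalerDl.
Qed.

Lemma cone_scale A x c v : 0 <= c -> cone A x v -> cone A x (c *: v).
Proof.
move=> hc [m [h ->]]; exists (fun a => c * m a); split.
  by move=> a; apply: mulr_ge0.
by rewrite scaler_sumr; apply: eq_bigr => a _; rewrite scalerA.
Qed.

Lemma sum_pick (V : zmodType) (s : seq pt) (b : pt) (F : pt -> V) : uniq s -> b \in s ->
  \sum_(a <- s) (if a == b then F a else 0) = F b.
Proof.
move=> hu hb.
rewrite (bigID (fun a => a == b)) /= [X in _ + X]big1; last by move=> a /negbTE ->.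
rewrite addr0 -big_filter.
have -> : [seq a <- s | a == b] = [:: b].
  by rewrite -(filter_pred1_uniq hu hb); apply: eq_filter => a; rewrite /= eq_sym.
by rewrite big_cons big_nil eqxx addr0.
Qed.

Lemma cone_pt A x b : uniq A -> b \in A -> cone A x (b - x).
Proof.
move=> hu hb; exists (fun a => if a == b then 1 else 0); split.
  by move=> a; case: ifP.
rewrite -(sum_pick (fun a => a - x) hu hb); apply: eq_bigr => a _.
by case: ifP; rewrite ?scale1r ?scale0r.
Qed.

Lemma dotp_rot (d w : pt) : dotp d (rot2 w) = cross w d.
Proof. rewrite dotpE /rot2 /cross !cE; ring. Qed.

Lemma rot_neq0 (w : pt) : w != 0 -> rot2 w != 0.
Proof.
move=> hw; apply/eqP => h; move/eqP: hw; apply; apply: vec_eq;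
  move: (congr1 (@c0 _) h) (congr1 (@c1 _) h); rewrite /rot2 !cE => h0 h1; lra.
Qed.

Lemma dotpvv (v : pt) : v != 0 -> 0 < dotp v v.
Proof. move=> hv; rewrite dotpE -!expr2; exact: nz_coord. Qed.

Lemma cross_id (a b v : pt) :
  cross a b * dotp v v = dotp a v * cross v b - dotp b v * cross v a.
Proof. rewrite !dotpE /cross; ring. Qed.

Lemma argmax_seq (s : seq pt) (f : pt -> R) : s != [::] ->
  exists2 m, m \in s & forall a, a \in s -> f a <= f m.
Proof.
elim: s => [//|b s IH] _.
have [->|hs] := eqVneq s [::].
  by exists b; rewrite ?mem_head // => a; rewrite inE => /eqP ->.
have [m hm H] := IH hs.
have [hle|hlt] := leP (f b) (f m).
  exists m; first by rewrite in_cons hm orbT.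
  by move=> a; rewrite in_cons => /orP [/eqP ->|]; [|apply: H].
exists b; first by rewrite mem_head.
move=> a; rewrite in_cons => /orP [/eqP ->|ha]; first exact: lexx.
by apply: le_trans (H a ha) (ltW hlt).
Qed.

Lemma parallel_eq (v d : pt) : cross v d = 0 -> dotp d v != 0 ->
  v = (dotp v v / dotp d v) *: d.
Proof.
move=> hc hD; apply: vec_eq; rewrite ?c0Z ?c1Z; apply: (mulIf hD);
  rewrite mulrAC divfK //; rewrite !dotpE; move: hc; rewrite /cross => hc;
  apply/eqP; rewrite -subr_eq0; apply/eqP.
- transitivity (c1 v * (c0 v * c1 d - c1 v * c0 d)); first ring.
  by rewrite hc mulr0.
- transitivity (- (c0 v * (c0 v * c1 d - c1 v * c0 d))); first ring.
  by rewrite hc mulr0 oppr0.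
Qed.

Lemma cone_all (A : seq pt) (x : pt) : uniq A ->
  (forall w, w != 0 -> exists a, a \in A /\ 0 < dotp (a - x) w) -> forall v, cone A x v.
Proof.
move=> hu hH v.
have [->|hv] := eqVneq v 0.
  exists (fun _ => 0); split => //; rewrite big1 // => a _; exact: scale0r.
have hvv := dotpvv hv.
have [[a [ha [hc hd]]]|hno1] :=
  pselect (exists a, a \in A /\ cross v (a - x) = 0 /\ 0 < dotp (a - x) v).
  have hd0 : dotp (a - x) v != 0 by rewrite gt_eqF.
  rewrite (parallel_eq hc hd0).
  by apply: cone_scale; [apply: divr_ge0; apply: ltW|apply: cone_pt].
have hno : forall a, a \in A -> cross v (a - x) = 0 -> dotp (a - x) v <= 0.
  move=> a ha hc; rewrite leNgt; apply/negP => hd; apply: hno1; by exists a.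
set Dp := [seq a <- A | 0 < cross v (a - x)].
set Dm := [seq a <- A | cross v (a - x) < 0].
have [Dp0|Dpn] := eqVneq Dp [::].
  exfalso; have [a [ha hd]] := hH _ (rot_neq0 hv).
  have : a \in Dp by rewrite mem_filter ha andbT -dotp_rot.
  by rewrite Dp0.
have [Dm0|Dmn] := eqVneq Dm [::].
  have hrv : - rot2 v != 0 by rewrite oppr_eq0 rot_neq0.
  exfalso; have [a [ha hd]] := hH _ hrv.
  have : a \in Dm by rewrite mem_filter ha andbT -oppr_gt0 -dotp_rot -dotpNr.
  by rewrite Dm0.
have [a1 ha1 H1] := argmax_seq (fun a => dotp (a - x) v / cross v (a - x)) Dpn.
have [a2 ha2 H2] := argmax_seq (fun a => dotp (a - x) v / (- cross v (a - x))) Dmn.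
move: ha1 ha2; rewrite !mem_filter => /andP [hp1 hA1] /andP [hm2 hA2].
have hp1' := hp1; have hm2' := hm2.
move: hp1' hm2'; set d1 := a1 - x; set d2 := a2 - x => hp1' hm2'.
have crossC : forall p q : pt, cross p q = - cross q p by move=> p q; rewrite /cross; ring.
have [hneg|hpos] := ltP (cross d1 d2) 0.
  have e : v = (cross v d2 / cross d1 d2) *: d1 + (cross d1 v / cross d1 d2) *: d2.
    have hn : cross d1 d2 != 0 by rewrite lt_eqF.
    clearbody d1 d2; move: hn; rewrite /cross => hn.
    by apply: vec_eq; rewrite !cE; field.
  rewrite e; apply: cone_add; apply: cone_scale; try exact: cone_pt.
  - rewrite -mulrNN -invrN; apply: divr_ge0; lra.
  - rewrite -mulrNN -invrN crossC; apply: divr_ge0; lra.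
exfalso.
have hd1 : d1 != 0 by apply/eqP => h; move: hp1'; rewrite h /cross !cE; lra.
have hw : - rot2 d1 != 0 by rewrite oppr_eq0 rot_neq0.
have [a [ha hd]] := hH _ hw.
move: hd; rewrite dotpNr dotp_rot oppr_gt0.
set d := a - x => hd.
suff : 0 <= cross d1 d by lra.
have hid := cross_id d1 d v.
suff : 0 <= cross d1 d * dotp v v by rewrite pmulr_lge0.
rewrite hid.
set P := cross v d1; set X1 := dotp d1 v; set X := dotp d v.
have hP : 0 < P by [].
have [hS|hS|hS] := ltgtP (cross v d) 0.
- have hm : a \in Dm by rewrite mem_filter ha andbT.
  have := H2 a hm; rewrite /= -/d -/X -/d2 => hq.
  set S := - cross v d.
  set Q := - cross v d2.
  have hQ : 0 < Q by rewrite /Q oppr_gt0.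
  have hS' : 0 < S by rewrite /S oppr_gt0.
  move: hq; rewrite -/S -/Q.
  set p := X / S; set q := dotp d2 v / Q => hpq.
  have eX : X = p * S by rewrite /p divfK // gt_eqF.
  have eX2 : dotp d2 v = q * Q by rewrite /q divfK // gt_eqF.
  have K := cross_id d1 d2 v.
  have hK : 0 <= cross d1 d2 * dotp v v by apply: mulr_ge0 => //; apply: ltW.
  rewrite K eX2 -/X1 -/P in hK.
  have ecd2 : cross v d2 = - Q by rewrite /Q opprK.
  rewrite ecd2 in hK.
  have k1 : 0 <= - X1 - q * P.
    have : 0 <= Q * (- X1 - q * P) by move: hK; rewrite -[X in _ <= X]/(_); nra.
    by rewrite pmulr_rge0.
  have ecd : cross v d = - S by rewrite /S opprK.
  rewrite ecd eX.
  have : 0 <= S * (- X1 - p * P) by apply: mulr_ge0; [lra| nra].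
  nra.
- have hq : a \in Dp by rewrite mem_filter ha andbT.
  have := H1 a hq; rewrite /= -/d -/X -/d1 -/X1 -/P => hq'.
  set S := cross v d.
  move: hq'; rewrite -/S.
  set p := X / S; set q := X1 / P => hpq.
  have eX : X = p * S by rewrite /p divfK // gt_eqF.
  have eX1 : X1 = q * P by rewrite /q divfK // gt_eqF.
  rewrite eX eX1.
  have -> : q * P * S - p * S * P = (q - p) * (P * S) by ring.
  move: hS; rewrite -/S => hS.
  apply: mulr_ge0; [lra|apply: mulr_ge0; lra].
- rewrite hS mulr0 add0r.
  have := hno a ha hS; rewrite -/d -/X => hX.
  nra.
Qed.

End Cone.


Section Interior.
Variable R : realType.
Notation pt := ('rV[R]_2).
Variable N : pt -> R.
Hypothesis hN : is_norm N.

Lemma abs_bounded (w y : pt) : bounded N w -> `|dotp y w| <= N y.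
Proof.
move=> hw; rewrite ler_norml hw andbT.
by have := hw (- y); rewrite dotpNl (NN hN) lerNl.
Qed.

Lemma cone_mass (A : seq pt) x (v : pt) (m m' : pt -> R) c :
  (forall a, 0 <= m a) -> v = \sum_(a <- A) m a *: (a - x) ->
  (forall a, 0 <= m' a) -> - v = \sum_(a <- A) m' a *: (a - x) ->
  exists mu : pt -> R, [/\ forall a, 0 <= mu a, c *: v = \sum_(a <- A) mu a *: (a - x) &
     \sum_(a <- A) mu a <= `|c| * (\sum_(a <- A) m a + \sum_(a <- A) m' a)].
Proof.
move=> hm ev hm' ev'.
have hM : 0 <= \sum_(a <- A) m a by apply: sumr_ge0.
have hM' : 0 <= \sum_(a <- A) m' a by apply: sumr_ge0.
have [hc|hc] := leP 0 c.
  exists (fun a => c * m a); split.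
  - by move=> a; apply: mulr_ge0.
  - by rewrite ev scaler_sumr; apply: eq_bigr => a _; rewrite scalerA.
  - by rewrite -mulr_sumr ger0_norm // ler_wpM2l // lerDl.
exists (fun a => - c * m' a); split.
- by move=> a; apply: mulr_ge0 => //; lra.
- have -> : c *: v = (- c) *: (- v) by rewrite scaleNr scalerN opprK.
  rewrite ev' scaler_sumr; apply: eq_bigr => a _; by rewrite scalerA.
- by rewrite -mulr_sumr ltr0_norm // ler_wpM2l ?lerDr //; lra.
Qed.

Lemma sum_shift (A : seq pt) x (l : pt -> R) :
  \sum_(a <- A) l a *: (a - x) = \sum_(a <- A) l a *: a - (\sum_(a <- A) l a) *: x.
Proof.
rewrite scaler_suml -sumrB; apply: eq_bigr => a _; by rewrite scalerBr.
Qed.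

Lemma sum_nth_ord (V : zmodType) (A : seq pt) (F : pt -> V) :
  \sum_(a <- A) F a = \sum_(i < size A) F (nth 0 A i).
Proof. by rewrite (big_nth 0) big_mkord. Qed.

Lemma interior (A : seq pt) (x : pt) : (forall v, cone A x v) ->
  exists e, 0 < e /\ forall z, N (z - x) < e -> conv A z.
Proof.
move=> hC.
set q0 : pt := mkv 1 0.
have hq0 : q0 != 0 by apply/eqP => h; move: (congr1 (@c0 _) h); rewrite /q0 !cE; lra.
have [bf ef] := nf_norming hN hq0.
set wf := nf N q0 in bf ef.
have hNq := Ngt0 hN hq0.
have hwf : wf != 0 by apply/eqP => h; move: ef; rewrite h dotp0r; lra.
set r := rot2 wf.
have hr : r != 0 by apply: rot_neq0.
have [bg eg] := nf_norming hN hr.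
set wg := nf N r in bg eg.
have hNr := Ngt0 hN hr.
have erf : dotp r wf = 0 by rewrite /r dotpE /rot2 !cE; ring.
have eD : cross q0 r = N q0 by rewrite -ef /r /cross /rot2 dotpE !cE; ring.
have coord : forall y : pt, exists al be, y = al *: q0 + be *: r /\
    `|al| * N q0 <= N y /\ `|be| * N r <= 2 * N y.
  move=> y.
  set al := cross y r / cross q0 r; set be := cross q0 y / cross q0 r.
  have ey : y = al *: q0 + be *: r.
    have hD : cross q0 r != 0 by rewrite eD gt_eqF.
    clearbody q0 r; move: hD; rewrite /al /be /cross => hD.
    by apply: vec_eq; rewrite !cE; field.
  exists al, be; split => //.
  have eal : al * N q0 = dotp y wf.
    by rewrite /al eD divfK ?gt_eqF // /r /cross /rot2 dotpE !cE; ring.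
  have h1 : `|al| * N q0 <= N y.
    by rewrite -(ger0_norm (ltW hNq)) -normrM eal abs_bounded.
  split => //.
  have eg' : dotp y wg = al * dotp q0 wg + be * N r.
    by rewrite {1}ey dotpDl !dotpZl eg.
  have hb0 : `|be * N r| <= `|dotp y wg| + `|al * dotp q0 wg|.
    have -> : be * N r = dotp y wg - al * dotp q0 wg by rewrite eg'; ring.
    by apply: ler_normB.
  have hb1 : `|be * N r| = `|be| * N r by rewrite normrM (ger0_norm (ltW hNr)).
  have hb2 : `|al * dotp q0 wg| = `|al| * `|dotp q0 wg| by rewrite normrM.
  rewrite hb1 hb2 in hb0.
  have g2 := abs_bounded y bg; have g3 := abs_bounded q0 bg.
  have g1 := normr_ge0 al.
  have : `|al| * `|dotp q0 wg| <= `|al| * N q0 by rewrite ler_wpM2l.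
  lra.
have [m1 [hm1 e1]] := hC q0.
have [m2 [hm2 e2]] := hC (- q0).
have [m3 [hm3 e3]] := hC r.
have [m4 [hm4 e4]] := hC (- r).
set M1 := \sum_(a <- A) m1 a; set M2 := \sum_(a <- A) m2 a.
set M3 := \sum_(a <- A) m3 a; set M4 := \sum_(a <- A) m4 a.
have hM1 : 0 <= M1 by apply: sumr_ge0.
have hM2 : 0 <= M2 by apply: sumr_ge0.
have hM3 : 0 <= M3 by apply: sumr_ge0.
have hM4 : 0 <= M4 by apply: sumr_ge0.
have hM12 : 0 < M1 + M2.
  rewrite lt_def addr_ge0 // andbT; apply/eqP => h0.
  have h1 : M1 = 0 by lra.
  move/eqP: hq0; apply.
  rewrite e1 big_seq big1 // => a ha.
  move: h1 => /eqP; rewrite /M1 psumr_eq0 // => /allP /(_ a ha) /eqP ->.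
  by rewrite scale0r.
set T := M1 + M2 + M3 + M4.
set mm := Num.min (N q0) (N r).
have hmm : 0 < mm by rewrite lt_min hNq hNr.
exists (mm / (3 * (T + 1))); split.
  by apply: divr_gt0 => //; apply: mulr_gt0 => //; rewrite /T; lra.
move=> z hz.
set y := z - x.
have [al [be [ey [hal hbe]]]] := coord y.
have [mua [hmua ea ma]] := cone_mass al hm1 e1 hm2 e2.
have [mub [hmub eb mb]] := cone_mass be hm3 e3 hm4 e4.
set mu := fun a => mua a + mub a.
have hmu : forall a, 0 <= mu a by move=> a; apply: addr_ge0.
have eyu : y = \sum_(a <- A) mu a *: (a - x).
  by rewrite ey ea eb -big_split; apply: eq_bigr => a _; rewrite scalerDl.
set S := \sum_(a <- A) mu a.
have hS0 : 0 <= S by apply: sumr_ge0.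
have hS1 : S < 1.
  have eS : S = \sum_(a <- A) mua a + \sum_(a <- A) mub a by rewrite -big_split.
  have hmq : mm <= N q0 by rewrite ge_min lexx.
  have hmr : mm <= N r by rewrite ge_min lexx orbT.
  have ha1 : `|al| * mm <= N y.
    by apply: le_trans hal; rewrite ler_wpM2l.
  have hb1 : `|be| * mm <= 2 * N y.
    by apply: le_trans hbe; rewrite ler_wpM2l.
  have hT : 0 <= T by rewrite /T; lra.
  have hz' : N y * (3 * (T + 1)) < mm.
    by rewrite -ltr_pdivlMr //; apply: mulr_gt0 => //; lra.
  have hmassa : \sum_(a <- A) mua a <= `|al| * T.
    apply: le_trans ma _; rewrite ler_wpM2l // -/M1 -/M2 /T; lra.
  have hmassb : \sum_(a <- A) mub a <= `|be| * T.
    apply: le_trans mb _; rewrite ler_wpM2l // -/M3 -/M4 /T; lra.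
  have hSm : S * mm <= 3 * N y * T.
    have : S * mm <= (`|al| * mm + `|be| * mm) * T.
      rewrite eS; have := normr_ge0 al; have := normr_ge0 be; nra.
    have := normr_ge0 al; have := normr_ge0 be; nra.
  have := Nge0 hN y; nra.
set M := M1 + M2.
set lam := fun a => mu a + (1 - S) * ((m1 a + m2 a) / M).
have hlam : forall a, 0 <= lam a.
  move=> a; apply: addr_ge0 => //; apply: mulr_ge0; first lra.
  by apply: divr_ge0; [apply: addr_ge0|apply: ltW].
have hsum : \sum_(a <- A) lam a = 1.
  rewrite big_split /= -/S -mulr_sumr -mulr_suml big_split /= -/M1 -/M2 -/M.
  by rewrite divff ?gt_eqF // mulr1; ring.
have hvec : \sum_(a <- A) lam a *: (a - x) = y.
  rewrite /lam.
  under eq_bigr => a _ do rewrite scalerDl.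
  rewrite big_split /= -eyu.
  have -> : \sum_(a <- A) ((1 - S) * ((m1 a + m2 a) / M)) *: (a - x) =
            ((1 - S) / M) *: (\sum_(a <- A) m1 a *: (a - x) + \sum_(a <- A) m2 a *: (a - x)).
    rewrite -big_split scaler_sumr; apply: eq_bigr => a _.
    by rewrite /= -scalerDl scalerA; congr (_ *: _); ring.
  by rewrite -e1 -e2 subrr scaler0 addr0.
exists (fun i => lam (nth 0 A i)); split.
- by move=> i; apply: hlam.
- by rewrite -(sum_nth_ord A lam).
- rewrite -(sum_nth_ord A (fun a => lam a *: a)).
  have := sum_shift A x lam; rewrite hvec hsum scale1r => h.
  by rewrite -[z](subrK x) -/y h subrK.
Qed.

Lemma separation (A : seq pt) (x : pt) : uniq A -> in_boundary N (conv A) x ->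
  exists w0, w0 != 0 /\ forall a, a \in A -> dotp a w0 <= dotp x w0.
Proof.
move=> hu hb.
have [//|hno] := pselect (exists w0, w0 != 0 /\ forall a, a \in A -> dotp a w0 <= dotp x w0).
exfalso.
have hH : forall w, w != 0 -> exists a, a \in A /\ 0 < dotp (a - x) w.
  move=> w hw.
  have [//|hn] := pselect (exists a, a \in A /\ 0 < dotp (a - x) w).
  exfalso; apply: hno; exists w; split => // a ha.
  rewrite leNgt; apply/negP => h; apply: hn; exists a; split => //.
  by rewrite dotpBl subr_gt0.
have [e [he H]] := interior (cone_all hu hH).
have [_ [z [hz hze]]] := hb e he.
by apply: hz; apply: H.
Qed.
End Interior.


Section Count.
Variable R : realFieldType.
Variable T : eqType.

Lemma sum1_size (s : seq T) : \sum_(o <- s) (1 : R) = (size s)%:R.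
Proof. by elim: s => [|b s IH]; rewrite ?big_nil // big_cons IH /= mulrS. Qed.

Lemma sum_pos (s : seq T) (F : T -> R) : (forall o, o \in s -> 0 < F o) -> s != [::] ->
  0 < \sum_(o <- s) F o.
Proof.
case: s => [//|b s] H _; rewrite big_cons.
have h1 := H b (mem_head _ _).
have : 0 <= \sum_(o <- s) F o.
  rewrite big_seq; apply: sumr_ge0 => o ho; apply: ltW; apply: H; by rewrite in_cons ho orbT.
lra.
Qed.

Lemma sum_ge0_seq (s : seq T) (F : T -> R) : (forall o, o \in s -> 0 <= F o) ->
  0 <= \sum_(o <- s) F o.
Proof. by move=> H; rewrite big_seq; apply: sumr_ge0. Qed.

Lemma sum_eq0_seq (s : seq T) (F : T -> R) : (forall o, o \in s -> 0 <= F o) ->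
  \sum_(o <- s) F o = 0 -> forall o, o \in s -> F o = 0.
Proof.
move=> H /eqP; rewrite big_seq psumr_eq0 //.
by move=> /allP K o ho; move: (K o ho); rewrite ho /= => /eqP.
Qed.

Lemma sum_filterC (s : seq T) (P : pred T) (F : T -> R) :
  \sum_(o <- s) F o = \sum_(o <- [seq o <- s | P o]) F o + \sum_(o <- [seq o <- s | ~~ P o]) F o.
Proof. by rewrite (bigID P) /= !big_filter. Qed.

Lemma count_lemma (O : seq T) (a b al be nu : T -> R) (c h : R) (p m : nat) :
  (forall o, o \in O -> [/\ -1 < a o, a o < 1, 0 < b o & 0 < be o]) ->
  (forall o, o \in O ->
     [/\ `|al o| < nu o, al o * a o + be o * b o = nu o & al o * c + be o * h <= nu o]) ->
  h = \sum_(o <- O) b o -> c = p%:R - m%:R + \sum_(o <- O) a o -> -1 <= c -> c <= 1 ->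
  odd (size O + p + m) ->
  [/\ (size O <= 1)%N, size O = 1%N -> p = m & size O = 0%N -> p = m.+1 \/ m = p.+1].
Proof.
move=> H H' eh ec hc1 hc2 hodd.
case: O H H' eh ec hodd => [|o1 [|o2 O]] H H' eh ec hodd.
- rewrite big_nil addr0 in ec.
  have hpm : p != m by apply/eqP => e; move: hodd; rewrite /= add0n e addnn odd_double.
  have h1 : (p <= m + 1)%N by rewrite -(ler_nat R) natrD; lra.
  have h2 : (m <= p + 1)%N by rewrite -(ler_nat R) natrD; lra.
  split => // _; lia.
- rewrite big_cons big_nil addr0 in ec.
  have [ha1 ha2 _ _] := H o1 (mem_head _ _).
  have h1 : (p < m + 2)%N by rewrite -(ltr_nat R) natrD; lra.
  have h2 : (m < p + 2)%N by rewrite -(ltr_nat R) natrD; lra.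
  split => // _.
  have : p = m \/ p = m.+1 \/ m = p.+1 by lia.
  case=> [//|[e|e]]; move: hodd; rewrite /= e !oddD /=; by case: (odd _).
exfalso.
move: H H' eh ec hodd; set Os := [:: o1, o2 & O] => H H' eh ec hodd.
have hOs : Os != [::] by [].
have hb : forall o, o \in Os -> 0 < b o by move=> o /H [].
have hh : 0 < h by rewrite eh; apply: sum_pos.
set OR := [seq o <- Os | c <= a o]; set OL := [seq o <- Os | ~~ (c <= a o)].
have memR : forall o, o \in OR -> o \in Os /\ c <= a o.
  by move=> o; rewrite mem_filter => /andP [].
have memL : forall o, o \in OL -> o \in Os /\ a o < c.
  by move=> o; rewrite mem_filter -ltNge => /andP [].
have hsz : (size OR + size OL)%N = size Os by rewrite !size_filter count_predC.
set d1 := \sum_(o <- OR) (1 - a o); set d2 := \sum_(o <- OL) (1 + a o).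
have ed1 : d1 = (size OR)%:R - \sum_(o <- OR) a o by rewrite /d1 sumrB sum1_size.
have ed2 : d2 = (size OL)%:R + \sum_(o <- OL) a o by rewrite /d2 big_split sum1_size.
have esa : \sum_(o <- Os) a o = \sum_(o <- OR) a o + \sum_(o <- OL) a o by apply: sum_filterC.
have esb : h = \sum_(o <- OR) b o + \sum_(o <- OL) b o by rewrite eh; apply: sum_filterC.
have hE : c + d1 - d2 = (p + size OR)%:R - (m + size OL)%:R.
  by rewrite ed1 ed2 ec esa !natrD; ring.
have hpar : (p + size OR)%N != (m + size OL)%N.
  apply/eqP => e; move: hodd; rewrite -hsz.
  have -> : (size OR + size OL + p + m = (p + size OR) + (m + size OL))%N by lia.
  by rewrite e addnn odd_double.
have hX : forall o, o \in Os ->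
    (a o - c) * (nu o - al o) <= be o * ((1 - c) * b o - (1 - a o) * h).
  move=> o ho; have [ha1 ha2 hb1 hbe] := H o ho; have [hn e1 hq] := H' o ho.
  have k : (1 - a o) * (be o * h) <= (1 - a o) * (nu o - al o * c).
    by rewrite ler_wpM2l; lra.
  have -> : be o * ((1 - c) * b o - (1 - a o) * h) =
    (1 - c) * (be o * b o) - (1 - a o) * (be o * h) by ring.
  have -> : be o * b o = nu o - al o * a o by lra.
  have -> : (a o - c) * (nu o - al o) =
    (1 - c) * (nu o - al o * a o) - (1 - a o) * (nu o - al o * c) by ring.
  lra.
have hY : forall o, o \in Os ->
    (c - a o) * (nu o + al o) <= be o * ((1 + c) * b o - (1 + a o) * h).
  move=> o ho; have [ha1 ha2 hb1 hbe] := H o ho; have [hn e1 hq] := H' o ho.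
  have k : (1 + a o) * (be o * h) <= (1 + a o) * (nu o - al o * c).
    by rewrite ler_wpM2l; lra.
  have -> : be o * ((1 + c) * b o - (1 + a o) * h) =
    (1 + c) * (be o * b o) - (1 + a o) * (be o * h) by ring.
  have -> : be o * b o = nu o - al o * a o by lra.
  have -> : (c - a o) * (nu o + al o) =
    (1 + c) * (nu o - al o * a o) - (1 + a o) * (nu o - al o * c) by ring.
  lra.
have hbR : 0 <= \sum_(o <- OR) b o by apply: sum_ge0_seq => o /memR [/hb /ltW].
have hbL : 0 <= \sum_(o <- OL) b o by apply: sum_ge0_seq => o /memL [/hb /ltW].
have hd1 : 0 <= d1 by apply: sum_ge0_seq => o /memR [/H [h1 h2 _ _] _]; lra.
have hd2 : 0 <= d2 by apply: sum_ge0_seq => o /memL [/H [h1 h2 _ _] _]; lra.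
have [hlt|hgt] : (p + size OR < m + size OL)%N \/ (m + size OL < p + size OR)%N.
  by move: hpar; case: ltngtP => //; [left|right].
-
  have hE' : c + d1 - d2 <= -1.
    rewrite hE; have : ((p + size OR)%N.+1%:R <= (m + size OL)%:R :> R) by rewrite ler_nat.
    rewrite -addn1 natrD; lra.
  set SY := \sum_(o <- OL) ((1 + c) * b o - (1 + a o) * h).
  have eSY : SY = (1 + c) * \sum_(o <- OL) b o - d2 * h.
    by rewrite /SY sumrB -mulr_sumr -mulr_suml.
  have hOL : OL = [::].
    have [//|hne] := eqVneq OL [::]; exfalso.
    have : 0 < SY.
      apply: sum_pos => // o /memL [ho hlt'].
      have [_ _ _ hbe] := H o ho; have [hn _ _] := H' o ho.
      have : 0 < (c - a o) * (nu o + al o).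
        apply: mulr_gt0; first lra.
        by move: hn; rewrite ltr_norml; lra.
      move=> /lt_le_trans /(_ (hY o ho)).
      by rewrite pmulr_rgt0.
    rewrite eSY.
    have : (1 + c) * \sum_(o <- OL) b o <= (1 + c) * h by rewrite ler_wpM2l; lra.
    nra.
  have hd2' : d2 = 0 by rewrite /d2 hOL big_nil.
  have hORs : OR = Os.
    apply/eqP; rewrite -(@filter_predT _ Os) /OR.
    apply/eqP; apply: eq_in_filter => o ho /=.
    apply: negbNE; apply/negP => hn.
    have : o \in OL by rewrite mem_filter hn ho.
    by rewrite hOL.
  have : 0 < d1.
    rewrite /d1 hORs; apply: sum_pos => // o /H [h1 h2 _ _]; lra.
  lra.
-
  have hE' : 1 <= c + d1 - d2.
    rewrite hE; have : ((m + size OL)%N.+1%:R <= (p + size OR)%:R :> R) by rewrite ler_nat.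
    rewrite -addn1 natrD; lra.
  have hXR : forall o, o \in OR -> 0 <= (1 - c) * b o - (1 - a o) * h.
    move=> o /memR [ho hle].
    have [_ _ _ hbe] := H o ho; have [hn _ _] := H' o ho.
    have : 0 <= (a o - c) * (nu o - al o).
      apply: mulr_ge0; first lra.
      by move: hn; rewrite ltr_norml; lra.
    move=> /le_trans /(_ (hX o ho)).
    by rewrite pmulr_rge0.
  set SX := \sum_(o <- OR) ((1 - c) * b o - (1 - a o) * h).
  have eSX : SX = (1 - c) * \sum_(o <- OR) b o - d1 * h.
    by rewrite /SX sumrB -mulr_sumr -mulr_suml.
  have hSX : 0 <= SX by apply: sum_ge0_seq.
  have k1 : (1 - c) * \sum_(o <- OR) b o <= (1 - c) * h by rewrite ler_wpM2l; lra.
  have hd2z : d2 = 0.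
    have : d2 * h <= 0 by nra.
    by rewrite pmulr_lle0 //; lra.
  have hOL : OL = [::].
    have [//|hne] := eqVneq OL [::]; exfalso.
    have : 0 < d2 by apply: sum_pos => // o /memL [/H [h1 h2 _ _] _]; lra.
    lra.
  have hbRh : \sum_(o <- OR) b o = h by rewrite esb hOL big_nil addr0.
  have hSX0 : SX = 0.
    rewrite eSX hbRh.
    have : (1 - c) * h <= d1 * h by rewrite ler_wpM2r; lra.
    lra.
  have hac : forall o, o \in OR -> a o = c.
    move=> o hoR; have := sum_eq0_seq hXR hSX0 hoR => hz.
    have [ho hle] := memR o hoR.
    have [_ _ _ hbe] := H o ho; have [hn _ _] := H' o ho.
    have := hX o ho; rewrite hz mulr0 => k.
    have hnu : 0 < nu o - al o by move: hn; rewrite ltr_norml; lra.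
    have : a o - c <= 0.
      by rewrite -(pmulr_lle0 _ hnu).
    lra.
  have hORs : OR = Os.
    apply/eqP; rewrite -(@filter_predT _ Os) /OR.
    apply/eqP; apply: eq_in_filter => o ho /=.
    apply: negbNE; apply/negP => hn.
    have : o \in OL by rewrite mem_filter hn ho.
    by rewrite hOL.
  have ed1' : d1 = (size Os)%:R * (1 - c).
    rewrite /d1 (eq_big_seq (fun _ => 1 * (1 - c))); last by move=> o /hac ->; rewrite mul1r.
    by rewrite -mulr_suml sum1_size hORs.
  have hd1c : d1 = 1 - c.
    have : d1 * h = (1 - c) * h by move: hSX0; rewrite eSX hbRh; lra.
    have hh0 : h != 0 by rewrite gt_eqF.
    by move/(mulIf hh0).
  have hsz2 : (2 <= size Os)%N by [].
  have : (2 : R) <= (size Os)%:R by rewrite (ler_nat R 2).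
  have o1R : o1 \in OR by rewrite hORs mem_head.
  have ha1 := hac o1 o1R.
  have [_ h2 _ _] := H o1 (mem_head _ _).
  nra.
Qed.

End Count.


Section Main.
Variable R : realType.
Notation pt := ('rV[R]_2).
Variable N : pt -> R.
Hypothesis hN : is_norm N.
Hypothesis hsm : smooth N.

Lemma frame (w0 : pt) : w0 != 0 -> exists u we s : pt,
  [/\ N u = 1, norming N u we, dotp u w0 = 0, dotp s we = 0 & 0 < dotp s w0] /\
      forall y w, dotp y w = dotp y we * dotp u w + (dotp y w0 / dotp s w0) * dotp s w.
Proof.
move=> hw0.
set t := rot2 w0.
have ht : t != 0 by apply: rot_neq0.
have hNt := Ngt0 hN ht.
set lam := (N t)^-1.
have hlam : 0 < lam by rewrite invr_gt0.
set u := lam *: t.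
have hu : N u = 1 by rewrite (NZp hN) ?ltW // mulVf // gt_eqF.
have hu0 : u != 0 by apply/eqP => e; move: hu; rewrite e (N0 hN); lra.
have [bwe ewe] := nf_norming hN hu0.
set we := nf N u in bwe ewe.
set s : pt := mkv (c1 we) (- c0 we).
exists u, we, s.
have hsw : dotp s we = 0 by rewrite dotpE /s !cE; ring.
have eDs : lam * dotp s w0 = 1.
  by rewrite -hu -ewe /u /t /s !dotpE /rot2 !cE; ring.
have hDs : 0 < dotp s w0.
  have : 0 < lam * dotp s w0 by rewrite eDs.
  by rewrite pmulr_rgt0.
have elam : lam = (dotp s w0)^-1.
  have hD0 : dotp s w0 != 0 by rewrite gt_eqF.
  by apply: (mulIf hD0); rewrite eDs mulVf.
split; first split => //.
- by rewrite /u dotpZl /t dotpE /rot2 !cE; ring.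
- move=> y w.
  have ey : y = dotp y we *: u + (dotp y w0 / dotp s w0) *: s.
    have hD : dotp s w0 != 0 by rewrite gt_eqF.
    have cu0 : c0 u = lam * - c1 w0 by rewrite /u /t /rot2 !cE.
    have cu1 : c1 u = lam * c0 w0 by rewrite /u /t /rot2 !cE.
    have cs0 : c0 s = c1 we by rewrite /s !cE.
    have cs1 : c1 s = - c0 we by rewrite /s !cE.
    move: hD cu0 cu1 cs0 cs1 elam; clearbody s u we t lam => hD cu0 cu1 cs0 cs1 elam.
    move: hD; rewrite !dotpE cs0 cs1 => hD.
    by apply: vec_eq; rewrite !cE ?cu0 ?cu1 ?cs0 ?cs1 elam !dotpE cs0 cs1; field.
  by rewrite {1}ey dotpDl !dotpZl.
Qed.

Lemma classify (w0 u we s d : pt) : N u = 1 -> norming N u we -> dotp s we = 0 ->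
  0 < dotp s w0 ->
  (forall y w, dotp y w = dotp y we * dotp u w + (dotp y w0 / dotp s w0) * dotp s w) ->
  d != 0 -> 0 <= dotp d w0 ->
  [/\ 0 <= dotp s (nf N d),
      dotp s (nf N d) = 0 ->
        (forall y, dotp y (nf N d) = dotp y we) \/ (forall y, dotp y (nf N d) = - dotp y we) &
      0 < dotp s (nf N d) -> [/\ -1 < dotp u (nf N d), dotp u (nf N d) < 1,
         0 < dotp d w0 / dotp s w0 & `|dotp d we| < N d]].
Proof.
move=> hu [bwe ewe] hsw hDs hdec hd hH.
have [bp ep] := nf_norming hN hd.
set p := nf N d in bp ep *.
set mu := dotp d w0 / dotp s w0.
have hmu : 0 <= mu by apply: divr_ge0 => //; apply: ltW.
have hdp : N d = dotp d we * dotp u p + mu * dotp s p by rewrite -{1}ep hdec.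
have hpu1 : dotp u p <= 1 by rewrite -hu bp.
have hpu2 : - dotp u p <= 1 by rewrite -dotpNl -hu -(NN hN u) bp.
have hed : `|dotp d we| <= N d := abs_bounded hN d bwe.
have hNd : 0 < N d := Ngt0 hN hd.
have hu0 : u != 0 by apply/eqP => e; move: hu; rewrite e (N0 hN); lra.
have sgn : (forall y, dotp y p = dotp y we) \/ (forall y, dotp y p = - dotp y we) ->
    dotp s p = 0.
  by case=> ->; rewrite hsw ?oppr0.
have core : (dotp d we = N d \/ - dotp d we = N d) ->
    (forall y, dotp y p = dotp y we) \/ (forall y, dotp y p = - dotp y we).
  case=> h.
  - by left; apply: (uniq_norming hN hsm hd (conj bp ep) (conj bwe h)).
  - right => y.
    have hn : norming N d (- we) by split; [apply: bounded_N|rewrite dotpNr].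
    by rewrite (uniq_norming hN hsm hd (conj bp ep) hn y) dotpNr.
have core2 : mu * dotp s p <= 0 ->
    (forall y, dotp y p = dotp y we) \/ (forall y, dotp y p = - dotp y we).
  move=> h; apply: core.
  have h1 : N d <= dotp d we * dotp u p by lra.
  have h2 : dotp d we * dotp u p <= `|dotp d we|.
    apply: le_trans (ler_norm _) _; rewrite normrM.
    have : `|dotp u p| <= 1 by rewrite ler_norml; lra.
    move=> h3; have := normr_ge0 (dotp d we); nra.
  have habs : `|dotp d we| = N d by lra.
  move: habs; case: (lerP 0 (dotp d we)) => hs.
  + by rewrite ger0_norm // => ->; left.
  + by rewrite ltr0_norm // => <-; right.
split.
- rewrite leNgt; apply/negP => hneg.
  have hle : mu * dotp s p <= 0 by nra.
  have := sgn (core2 hle); lra.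
- by move=> h0; apply: core2; rewrite h0 mulr0.
move=> hpos; split.
- rewrite ltNge; apply/negP => h.
  have hpu : dotp (- u) p = N (- u) by rewrite dotpNl (NN hN) hu; lra.
  have hnu : - u != 0 by rewrite oppr_eq0.
  have hn : norming N (- u) (- we).
    by split; [apply: bounded_N|rewrite dotpNr dotpNl opprK ewe (NN hN)].
  have := uniq_norming hN hsm hnu (conj bp hpu) hn s.
  rewrite dotpNr hsw oppr0; lra.
- rewrite ltNge; apply/negP => h.
  have hpu : dotp u p = N u by rewrite hu; lra.
  have := uniq_norming hN hsm hu0 (conj bp hpu) (conj bwe ewe) s.
  rewrite hsw; lra.
- rewrite lt_def hmu andbT; apply/eqP => h.
  have := sgn (core2 _); rewrite h mul0r lexx => /(_ isT); lra.
- rewrite lt_def hed andbT; apply/eqP => h.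
  have : dotp d we = N d \/ - dotp d we = N d.
    move: h; case: (lerP 0 (dotp d we)) => hs.
    + by rewrite ger0_norm // => <-; left.
    + by rewrite ltr0_norm // => <-; right.
  move/core/sgn; lra.
Qed.


Lemma sum_const_seq (s : seq pt) (c : R) : \sum_(a <- s) c = (size s)%:R * c.
Proof.
elim: s => [|b s IH]; first by rewrite big_nil mul0r.
by rewrite big_cons IH /= mulrS mulrDl mul1r.
Qed.

Lemma map_nth_enum (s : seq pt) (m : nat) : size s = m ->
  map (fun i : 'I_m => nth 0 s i) (enum 'I_m) = s.
Proof.
move=> hs.
have -> : map (fun i : 'I_m => nth 0 s i) (enum 'I_m) = map (nth 0 s) (map val (enum 'I_m)) by rewrite -map_comp.
rewrite val_enum_ord.
by have := mkseq_nth 0 s; rewrite /mkseq hs.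
Qed.

Lemma dc_lemma (u we x : pt) (Ml Pl : seq pt) : N u = 1 -> norming N u we ->
  size Ml = size Pl ->
  (forall a, a \in Pl -> a != x /\ dotp (x - a) we = N (x - a)) ->
  (forall b, b \in Ml -> b != x /\ dotp (x - b) we = - N (x - b)) ->
  double_cluster N (Ml ++ Pl).
Proof.
move=> hu [bwe ewe] hsz hP hM.
exists (size Pl), (fun i : 'I_(size Pl) => nth 0 Ml i), (fun i : 'I_(size Pl) => nth 0 Pl i).
split.
  by rewrite !map_nth_enum.
exists (fun b => N b <= 1 /\ dotp b we = 1); split.
  exists we, 1; split => //; split.
  - by apply/eqP => e; move: ewe; rewrite e dotp0r hu => /eqP; rewrite eq_sym oner_eq0.
  - by move=> b hb; apply: le_trans (bwe b) hb.
  - by exists u; rewrite /unit_ball hu ewe.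
move=> i.
have hxi : nth 0 Ml i \in Ml by apply: mem_nth; rewrite hsz.
have hyi : nth 0 Pl i \in Pl by apply: mem_nth.
move: hxi hyi; set xa := nth 0 Ml i; set ya := nth 0 Pl i => hxi hyi.
have [hx1 hx2] := hM xa hxi; have [hy1 hy2] := hP ya hyi.
have ev : xa - ya = (x - ya) - (x - xa) by apply: vec_eq; rewrite !cE; ring.
have hya : 0 < N (x - ya) by apply: (Ngt0 hN); rewrite subr_eq0 eq_sym.
have hxa : 0 <= N (x - xa) by apply: (Nge0 hN).
have hd : dotp (xa - ya) we = N (x - ya) + N (x - xa) by rewrite ev dotpBl hx2 hy2; ring.
have hn1 : N (xa - ya) <= N (x - ya) + N (x - xa).
  by rewrite ev; apply: le_trans (Ntri hN _ _) _; rewrite (NN hN).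
have hn2 := bwe (xa - ya).
have hv : dotp (xa - ya) we = N (xa - ya) by lra.
have hvp : 0 < N (xa - ya) by lra.
have hv0 : N (xa - ya) != 0 by rewrite gt_eqF.
split.
- rewrite (NZp hN); last by rewrite invr_ge0 ltW.
  by rewrite mulVf.
- by rewrite dotpZl hv mulVf.
Qed.

Lemma pseudo_lemma (u we x q : pt) (A Ml Pl : seq pt) : N u = 1 -> norming N u we ->
  size Ml = size Pl ->
  (forall a, a \in Pl -> a != x /\ dotp (x - a) we = N (x - a)) ->
  (forall b, b \in Ml -> b != x /\ dotp (x - b) we = - N (x - b)) ->
  uniq (Ml ++ Pl) ->
  (forall z, z \in A <-> (z \in Ml ++ Pl \/ z = x \/ z = q)) ->
  pseudo_double_cluster N A.
Proof.
move=> hu hwe hsz hP hM huq hmem.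
exists (Ml ++ Pl), x, q; split => //.
  exact: (dc_lemma hu hwe hsz hP hM).
move=> y; rewrite !big_cat /=.
have [bwe ewe] := hwe.
have kP : \sum_(a <- Pl) N (x - a) + (size Pl)%:R * dotp (y - x) we <= \sum_(a <- Pl) N (y - a).
  rewrite -sum_const_seq -big_split /= big_seq [X in _ <= X]big_seq.
  apply: ler_sum => a ha; have [_ h] := hP a ha.
  have := bwe (y - a).
  have -> : y - a = (y - x) + (x - a) by rewrite addrA subrK.
  by rewrite dotpDl h addrC.
have kM : \sum_(a <- Ml) N (x - a) - (size Ml)%:R * dotp (y - x) we <= \sum_(a <- Ml) N (y - a).
  rewrite -mulrN -sum_const_seq -big_split /= big_seq [X in _ <= X]big_seq.
  apply: ler_sum => a ha; have [_ h] := hM a ha.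
  have := bounded_N hN bwe (y - a).
  have -> : y - a = (y - x) + (x - a) by rewrite addrA subrK.
  by rewrite dotpNr dotpDl h opprD opprK addrC.
rewrite hsz in kM; lra.
Qed.

End Main.


Lemma dc_perm (R : realType) (N : 'rV[R]_2 -> R) (A B : seq 'rV[R]_2) :
  perm_eq A B -> double_cluster N B -> double_cluster N A.
Proof.
move=> hp [m [xs [ys [hB hF]]]]; exists m, xs, ys; split => //.
exact: perm_trans hp hB.
Qed.

Lemma mem_equiv (T : eqType) (A S C : seq T) (x q : T) :
  (forall z, z \in A <-> (z = x \/ z \in S)) ->
  (forall z, (z \in S) = (z == q) || (z \in C)) ->
  forall z, z \in A <-> (z \in C \/ z = x \/ z = q).
Proof.
move=> H1 H2 z; rewrite H1 H2; split.
- case=> [->|/orP [/eqP ->|hC]]; by [right; left|right; right|left].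
- case=> [hC|[->|->]]; [by right; rewrite hC orbT|by left|by right; rewrite eqxx].
Qed.

Theorem corollary4p8 (R : realType) (N : 'rV[R]_2 -> R)
  (hN : is_norm N) (hsmooth : smooth N)
  (A : seq 'rV[R]_2) (hA : uniq A) (heven : ~~ odd (size A))
  (hFT : exists x, is_FT N A x /\ in_boundary N (conv A) x) :
  double_cluster N A \/ pseudo_double_cluster N A.
Proof.
case: hFT => x [hft hbd].
have [w0 [hw0 hsep]] := separation hN hA hbd.
have [u [we [s [[hu hwe hu0 hsw hDs] hdec]]]] := frame hN hw0.
have [bwe ewe] := hwe.
have ewe1 : dotp u we = 1 by rewrite ewe hu.
set A' := [seq a <- A | a != x].
have memA' : forall a, a \in A' -> a \in A /\ a != x.
  by move=> a; rewrite mem_filter => /andP [].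
have hH : forall a, a \in A' -> x - a != 0 /\ 0 <= dotp (x - a) w0.
  move=> a /memA' [ha hax]; split; first by rewrite subr_eq0 eq_sym.
  by rewrite dotpBl subr_ge0 hsep.
have cl := fun a (ha : a \in A') =>
  classify hN hsmooth hu hwe hsw hDs hdec (proj1 (hH a ha)) (proj2 (hH a ha)).
set sP := fun a => 0 < dotp s (nf N (x - a)).
set O := [seq a <- A' | sP a]; set Z := [seq a <- A' | predC sP a].
set uP := fun a => 0 < dotp u (nf N (x - a)).
set P := [seq a <- Z | uP a]; set M := [seq a <- Z | predC uP a].
have hperm : perm_eq (O ++ (P ++ M)) A'.
  apply: perm_trans (permEl (perm_filterC sP A')).
  by rewrite perm_cat2l; apply: permEl; apply: perm_filterC.
have memO : forall a, a \in O -> a \in A' /\ sP a by move=> a; rewrite mem_filter => /andP [].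
have memZ : forall a, a \in Z -> a \in A' /\ ~~ sP a by move=> a; rewrite mem_filter => /andP [].
have memP : forall a, a \in P -> a \in Z /\ uP a by move=> a; rewrite mem_filter => /andP [].
have memM : forall a, a \in M -> a \in Z /\ ~~ uP a by move=> a; rewrite mem_filter => /andP [].
have hZ : forall a, a \in Z ->
    (forall y, dotp y (nf N (x - a)) = dotp y we) \/
    (forall y, dotp y (nf N (x - a)) = - dotp y we).
  move=> a /memZ [ha hs].
  have [h1 h2 _] := cl a ha.
  apply: h2; move: hs; rewrite /sP; lra.
have hPfun : forall a, a \in P -> forall y, dotp y (nf N (x - a)) = dotp y we.
  move=> a /memP [hz hup]; case: (hZ a hz) => // h.
  by move: hup; rewrite /uP h ewe1; lra.
have hMfun : forall a, a \in M -> forall y, dotp y (nf N (x - a)) = - dotp y we.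
  move=> a /memM [hz hup]; case: (hZ a hz) => // h.
  by move: hup; rewrite /uP h ewe1; lra.
have hnorm : forall a, a \in A' -> dotp (x - a) (nf N (x - a)) = N (x - a).
  by move=> a /hH [h _]; have [_ ->] := nf_norming hN h.
have hPsign : forall a, a \in P -> a != x /\ dotp (x - a) we = N (x - a).
  move=> a ha; have [hz _] := memP a ha; have [ha' _] := memZ a hz.
  by split; [case: (memA' a ha')|rewrite -(hPfun a ha) hnorm].
have hMsign : forall a, a \in M -> a != x /\ dotp (x - a) we = - N (x - a).
  move=> a ha; have [hz _] := memM a ha; have [ha' _] := memZ a hz.
  by split; [case: (memA' a ha')|rewrite -(hnorm a ha') (hMfun a ha) opprK].
set psi := fun y => \sum_(a <- A') dotp y (nf N (x - a)).
have epsi : forall y, psi y =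
    \sum_(a <- O) dotp y (nf N (x - a)) + ((size P)%:R - (size M)%:R) * dotp y we.
  move=> y; rewrite /psi -(perm_big _ hperm) !big_cat /=.
  have eP : \sum_(a <- P) dotp y (nf N (x - a)) = (size P)%:R * dotp y we.
    rewrite (eq_big_seq (fun _ => dotp y we)) ?sum_const_seq // => a ha.
    by rewrite hPfun.
  have eM : \sum_(a <- M) dotp y (nf N (x - a)) = (size M)%:R * - dotp y we.
    rewrite (eq_big_seq (fun _ => - dotp y we)) ?sum_const_seq // => a ha.
    by rewrite hMfun.
  rewrite eP eM; ring.
have hlin : forall y, psi y = dotp y we * psi u + (dotp y w0 / dotp s w0) * psi s.
  move=> y; rewrite /psi !mulr_sumr -big_split /=.
  by apply: eq_bigr => a _; rewrite hdec.
have psiN : forall y, psi (- y) = - psi y.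
  by move=> y; rewrite /psi -sumrN; apply: eq_bigr => a _; rewrite dotpNl.
have hopt := ft_opt hN hsmooth hA hft.
have hsz : size A' = (size O + (size P + size M))%N.
  by rewrite -(perm_size hperm) !size_cat.
have huq : uniq (O ++ (P ++ M)) by rewrite (perm_uniq hperm) filter_uniq.
have hopt' : forall y, 0 <= psi y + (if x \in A then N y else 0) by move=> y; exact: hopt y.
case hxA : (x \in A); rewrite hxA in hopt'.
- right.
  have hle : forall y, psi y <= N y.
    by move=> y; have := hopt' (- y); rewrite psiN (NN hN); lra.
  set c := psi u; set h := psi s.
  have hc1 : -1 <= c by have := hle (- u); rewrite psiN (NN hN) hu -/c; lra.
  have hc2 : c <= 1 by have := hle u; rewrite hu.
  have eh : h = \sum_(o <- O) dotp s (nf N (x - o)) by rewrite /h epsi hsw mulr0 addr0.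
  have ec : c = (size P)%:R - (size M)%:R + \sum_(o <- O) dotp u (nf N (x - o)).
    by rewrite /c epsi ewe1 mulr1 addrC.
  have hcnt : count (predC (fun a => a != x)) A = 1%N.
    rewrite (eq_count (a2 := pred1 x)); last by move=> a /=; rewrite negbK.
    by rewrite count_uniq_mem // hxA.
  have eA : size A = (size O + size P + size M).+1.
    rewrite -(count_predC (fun a => a != x)) hcnt -size_filter -/A' hsz; lia.
  have hoddO : odd (size O + size P + size M) by move: heven; rewrite eA /= negbK.
  have H1 : forall o, o \in O -> [/\ -1 < dotp u (nf N (x - o)), dotp u (nf N (x - o)) < 1,
      0 < dotp s (nf N (x - o)) & 0 < dotp (x - o) w0 / dotp s w0].
    move=> o /memO [ho hs]; have [_ _ h3] := cl o ho; have [k1 k2 k3 k4] := h3 hs; by split.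
  have H2 : forall o, o \in O -> [/\ `|dotp (x - o) we| < N (x - o),
      dotp (x - o) we * dotp u (nf N (x - o)) + dotp (x - o) w0 / dotp s w0 * dotp s (nf N (x - o))
        = N (x - o) &
      dotp (x - o) we * c + dotp (x - o) w0 / dotp s w0 * h <= N (x - o)].
    move=> o /memO [ho hs]; have [_ _ h3] := cl o ho; have [k1 k2 k3 k4] := h3 hs; split => //.
    - by rewrite -(hdec (x - o) (nf N (x - o))) hnorm.
    - by have := hle (x - o); rewrite hlin -/c -/h.
  have [hO1 hO1' hO0] := @count_lemma R _ O (fun o => dotp u (nf N (x - o)))
    (fun o => dotp s (nf N (x - o))) (fun o => dotp (x - o) we)
    (fun o => dotp (x - o) w0 / dotp s w0) (fun o => N (x - o)) c h (size P) (size M)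
    H1 H2 eh ec hc1 hc2 hoddO.
  have hmemA : forall z, z \in A <-> (z = x \/ z \in O ++ (P ++ M)).
    move=> z; rewrite (perm_mem hperm) mem_filter; split.
    - by case: (eqVneq z x) => [->|hzx] hz; [left|right; rewrite hz].
    - by case=> [->|/andP [] //]; rewrite hxA.
  have huPM : uniq (P ++ M) by move: huq; rewrite cat_uniq => /and3P [].
  case eO : O hO1 hO1' hO0 => [|o [|o' O']] //= _ hO1' hO0; rewrite eO /= in hmemA.
  +
    case: hO0 => // hsPM.
    * case eP : P hsPM hPsign huPM hmemA => [//|q P'] /= hsPM hPsign' huPM hmemA.
      apply: (pseudo_lemma hN (Ml := M) (Pl := P') (q := q) hu hwe).
      -- by case: hsPM.
      -- by move=> a ha; apply: hPsign'; rewrite in_cons ha orbT.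
      -- exact: hMsign.
      -- rewrite (perm_uniq (permEl (perm_catC M P'))).
         by move: huPM => /andP [].
      -- apply: (mem_equiv hmemA) => z.
         rewrite in_cons !mem_cat.
         by case: (z == q); case: (z \in P'); case: (z \in M).
    * case eM : M hsPM hMsign huPM hmemA => [//|q M'] /= hsPM hMsign' huPM hmemA.
      apply: (pseudo_lemma hN (Ml := M') (Pl := P) (q := q) hu hwe).
      -- by case: hsPM.
      -- exact: hPsign.
      -- by move=> a ha; apply: hMsign'; rewrite in_cons ha orbT.
      -- move: huPM; rewrite (perm_uniq (permEl (perm_catC P (q :: M')))) /=.
         by move=> /andP [].
      -- apply: (mem_equiv hmemA) => z.
         rewrite !mem_cat in_cons.
         by case: (z == q); case: (z \in P); case: (z \in M').
  +
    have hPM : size M = size P by rewrite hO1'.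
    apply: (pseudo_lemma hN (x := x) (Ml := M) (Pl := P) (q := o) hu hwe hPM hPsign hMsign).
    * by rewrite (perm_uniq (permEl (perm_catC M P))).
    * apply: (mem_equiv hmemA) => z.
      rewrite /= in_cons !mem_cat.
      by case: (z == o); case: (z \in P); case: (z \in M).
- left.
  have hA'A : A' = A.
    apply/all_filterP; apply/allP => a ha; apply/eqP => e.
    by move: hxA; rewrite -e ha.
  have hpsi0 : forall y, psi y = 0.
    by move=> y; have := hopt' y; have := hopt' (- y); rewrite psiN addr0; lra.
  have hO : O = [::].
    have [//|hne] := eqVneq O [::]; exfalso.
    have := hpsi0 s; rewrite epsi hsw mulr0 addr0 => h0.
    have : 0 < \sum_(a <- O) dotp s (nf N (x - a)).
      by apply: sum_pos => // a /memO [_ hs].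
    lra.
  have hPM : size M = size P.
    have := hpsi0 u; rewrite epsi hO big_nil add0r ewe1 mulr1 => h0.
    by apply/eqP; rewrite -(eqr_nat R); apply/eqP; lra.
  apply: (dc_perm (B := M ++ P)).
    rewrite -{1}hA'A perm_sym; apply: (perm_trans _ hperm); rewrite hO /=.
    by apply: permEl; apply: perm_catC.
  exact: (dc_lemma hN hu hwe hPM hPsign hMsign).
Qed.
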